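(* Let $\boldsymbol{W}$ have unit-norm rows, $|b_j|\le r_b$, $S\subseteq[N]$, and $\boldsymbol{a}^*$ with $a^*_j=0$ for $j\notin S$ and $\|\boldsymbol{a}^*\|\le\tilde r_a/\sqrt{|S|}$. Let $r_z\ge1\vee2\varepsilon$ and $$\epsilon_{\mathrm{approx}}=\sup_{\|\boldsymbol{U}\boldsymbol{x}\|\le r_z}|f(\boldsymbol{x};\boldsymbol{a}^*,\Pi_{\boldsymbol{U}}\boldsymbol{W},\boldsymbol{b})-h(\boldsymbol{U}\boldsymbol{x})|,$$ where $h:\mathbb{R}^k\to\mathbb{R}$ satisfies $|h(\boldsymbol{z})|\le L_h(1+\|\boldsymbol{z}\|^p)$ for all $\boldsymbol{z}$ and some constant $p\ge0$. Assume $\boldsymbol{x}$ is zero-mean with subGaussian norm bounded by an absolute constant, $k$ is a constant, and $\sigma$ satisfies condition (PL). Then $$\mathbb{E}\Big[\max_{\|\boldsymbol{\delta}\|\le\varepsilon}\big(f(\boldsymbol{x}+\boldsymbol{\delta};\boldsymbol{a}^*,\Pi_{\boldsymbol{U}}\boldsymbol{W},\boldsymbol{b})-h(\boldsymbol{U}(\boldsymbol{x}+\boldsymbol{\delta}))\big)^2\Big]\le\epsilon_{\mathrm{approx}}^2+\Big(C_{\bar q}L_\sigma^2\tilde r_a^2(1+\varepsilon^{2\bar q}+r_b^{2\bar q})+C_{p,k}L_h^2(1+\varepsilon^{2p})\Big)e^{-cr_z^2},$$ where $C_{\bar q}$ depends only on $\bar q$, $C_{p,k}$ only on $p,k$, and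 $c>0$ is an absolute constant.
   Context: $\boldsymbol{U}\in\mathbb{R}^{k\times d}$ has orthonormal rows $\boldsymbol{u}_1,\dots,\boldsymbol{u}_k$. For unit $\boldsymbol{w}$, $\Pi_{\boldsymbol{U}}\boldsymbol{w}=\boldsymbol{U}^\top\boldsymbol{U}\boldsymbol{w}/\|\boldsymbol{U}\boldsymbol{w}\|$ (and $=\boldsymbol{u}_1$ if $\boldsymbol{U}\boldsymbol{w}=0$); $\Pi_{\boldsymbol{U}}\boldsymbol{W}$ has rows $\Pi_{\boldsymbol{U}}\boldsymbol{w}_j$. Network $f(\boldsymbol{x};\boldsymbol{a},\boldsymbol{W},\boldsymbol{b})=\sum_ja_j\sigma(\langle\boldsymbol{w}_j,\boldsymbol{x}\rangle+b_j)$. Condition (PL): $\sigma(0)=0$ and $|\sigma(z_1)-\sigma(z_2)|\le L_\sigma(|z_1|^{\bar q-1}+|z_2|^{\bar q-1}+1)|z_1-z_2|$, $\bar q\ge1$. $\varepsilon\ge0$ is the adversary budget. *)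

(* Defs.v *)
From HB Require Import structures.
From mathcomp Require Import all_boot all_order all_algebra.
From mathcomp Require Import all_classical all_reals all_analysis.
From mathcomp Require Import measurable_realfun.
Set Implicit Arguments. Unset Strict Implicit. Unset Printing Implicit Defensive.
Import Order.TTheory GRing.Theory Num.Theory.
Import numFieldNormedType.Exports.
Local Open Scope classical_set_scope.
Local Open Scope ring_scope.

(* Vectors of R^n are row vectors 'rV[R]_n. *)
Definition dotv {R : ringType} {n : nat} (u v : 'rV[R]_n) : R :=
  \sum_(i < n) u ord0 i * v ord0 i.

Definition vnorm {R : realType} {n : nat} (v : 'rV[R]_n) : R :=
  Num.sqrt (dotv v v).

Definition first_row {R : ringType} {k d : nat} (U : 'M[R]_(k, d)) : 'rV[R]_d :=
  match [pick i : 'I_k | val i == 0%N] with Some i => row i U | None => 0 end.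

(* Pi_U w = U^T U w / ||U w||, and u_1 if U w = 0 (w as a row vector) *)
Definition PiU {R : realType} {k d : nat} (U : 'M[R]_(k, d)) (w : 'rV[R]_d)
  : 'rV[R]_d :=
  let Uw := w *m U^T in
  if Uw == 0 then first_row U else (vnorm Uw)^-1 *: (Uw *m U).

Definition PiUW {R : realType} {k d N : nat} (U : 'M[R]_(k, d)) (W : 'M[R]_(N, d))
  : 'M[R]_(N, d) :=
  \matrix_(j < N, l < d) (PiU U (row j W)) ord0 l.

Definition netf {R : realType} {d N : nat} (sigma : R -> R) (x : 'rV[R]_d)
  (a : 'I_N -> R) (W : 'M[R]_(N, d)) (b : 'I_N -> R) : R :=
  \sum_(j < N) a j * sigma (dotv (row j W) x + b j).

Definition PL_cond {R : realType} (sigma : R -> R) (Ls qbar : R) : Prop :=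
  sigma 0 = 0 /\ 1 <= qbar /\
  forall z1 z2 : R,
    `|sigma z1 - sigma z2| <=
      Ls * (`|z1| `^ (qbar - 1) + `|z2| `^ (qbar - 1) + 1) * `|z1 - z2|.

Definition psi2norm {dT} {T : measurableType dT} {R : realType}
  (P : probability T R) (Y : T -> R) : \bar R :=
  ereal_inf [set t%:E | t in [set t : R | 0 < t /\
     (\int[P]_w (expR (Y w ^+ 2 / t ^+ 2))%:E <= 2%:E)%E]].

Definition subg_norm_vec {dT} {T : measurableType dT} {R : realType} {n : nat}
  (P : probability T R) (X : T -> 'rV[R]_n) : \bar R :=
  ereal_sup [set psi2norm P (fun w => dotv v (X w)) | v in [set v | vnorm v = 1]].

Definition adv_loss {R : realType} {k d N : nat} (sigma : R -> R)
  (astar : 'I_N -> R) (U : 'M[R]_(k, d)) (W : 'M[R]_(N, d)) (b : 'I_N -> R)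
  (h : 'rV[R]_k -> R) (eps : R) (x : 'rV[R]_d) : \bar R :=
  ereal_sup [set ((netf sigma (x + delta) astar (PiUW U W) b
                   - h ((x + delta) *m U^T)) ^+ 2)%:E
             | delta in [set delta : 'rV[R]_d | vnorm delta <= eps]].

Definition eps_approx {R : realType} {k d N : nat} (sigma : R -> R)
  (astar : 'I_N -> R) (U : 'M[R]_(k, d)) (W : 'M[R]_(N, d)) (b : 'I_N -> R)
  (h : 'rV[R]_k -> R) (rz : R) : \bar R :=
  ereal_sup [set (`|netf sigma x astar (PiUW U W) b - h (x *m U^T)|)%:E
             | x in [set x : 'rV[R]_d | vnorm (x *m U^T) <= rz]].

(* Main.v *)
Require Import Defs.
From HB Require Import structures.
From mathcomp Require Import all_boot all_order all_algebra.
From mathcomp Require Import all_classical all_reals all_analysis.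
From mathcomp Require Import measurable_realfun.
From mathcomp Require Import ring lra.
Import Order.TTheory GRing.Theory Num.Theory.
Import numFieldNormedType.Exports.
Local Open Scope classical_set_scope.
Local Open Scope ring_scope.

Set Implicit Arguments. Unset Strict Implicit. Unset Printing Implicit Defensive.
Section Vec.
Variable R : realType.

Lemma dotvC n (u v : 'rV[R]_n) : dotv u v = dotv v u.
Proof. by apply: eq_bigr => i _; rewrite mulrC. Qed.

Lemma dotvDl n (u v w : 'rV[R]_n) : dotv (u + v) w = dotv u w + dotv v w.
Proof. by rewrite /dotv -big_split; apply: eq_bigr => i _; rewrite mxE mulrDl. Qed.

Lemma dotvZl n c (u w : 'rV[R]_n) : dotv (c *: u) w = c * dotv u w.
Proof. by rewrite /dotv mulr_sumr; apply: eq_bigr => i _; rewrite mxE mulrA. Qed.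

Lemma dotv_ge0 n (u : 'rV[R]_n) : 0 <= dotv u u.
Proof. by apply: sumr_ge0 => i _; rewrite -expr2 sqr_ge0. Qed.

Lemma vnorm_ge0 n (u : 'rV[R]_n) : 0 <= vnorm u.
Proof. exact: sqrtr_ge0. Qed.

Lemma vnorm_sq n (u : 'rV[R]_n) : vnorm u ^+ 2 = dotv u u.
Proof. by rewrite sqr_sqrtr // dotv_ge0. Qed.

Lemma dotvNl n (u w : 'rV[R]_n) : dotv (- u) w = - dotv u w.
Proof. by rewrite -scaleN1r dotvZl mulN1r. Qed.

Lemma dotvBl n (u v w : 'rV[R]_n) : dotv (u - v) w = dotv u w - dotv v w.
Proof. by rewrite dotvDl dotvNl. Qed.

Lemma dotvBr n (u v w : 'rV[R]_n) : dotv w (u - v) = dotv w u - dotv w v.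
Proof. by rewrite dotvC dotvBl !(dotvC w). Qed.

Lemma dotvZr n c (u w : 'rV[R]_n) : dotv w (c *: u) = c * dotv w u.
Proof. by rewrite dotvC dotvZl dotvC. Qed.

Lemma CS2 n (u v : 'rV[R]_n) : dotv u v ^+ 2 <= dotv u u * dotv v v.
Proof.
have Q t : 0 <= t ^+ 2 * dotv u u - (t * dotv u v) *+ 2 + dotv v v.
  have := dotv_ge0 (t *: u - v).
  rewrite dotvBl !dotvBr !dotvZl !dotvZr (dotvC v u).
  by congr (_ <= _); rewrite mulr2n; ring.
have A0 := dotv_ge0 u; have B0 := dotv_ge0 v.
set A := dotv u u in Q A0 *; set B := dotv v v in Q B0 *; set C := dotv u v in Q *.
have [Az|Ap] := eqVneq A 0.
  have [Cz|Cnz] := eqVneq C 0; first by rewrite Cz Az expr0n /= mul0r.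
  have := Q ((B + 1) / (C *+ 2)); rewrite Az mulr0 sub0r.
  have -> : ((B + 1) / (C *+ 2) * C) *+ 2 = B + 1.
    by rewrite mulr2n; field.
  lra.
have Ap' : 0 < A by rewrite lt_def Ap A0.
have := Q (C / A).
have -> : (C / A) ^+ 2 * A - (C / A * C) *+ 2 + B = B - C ^+ 2 / A.
  by rewrite mulr2n; field.
rewrite subr_ge0 ler_pdivrMr // mulrC => H.
exact: H.
Qed.


Lemma CS n (u v : 'rV[R]_n) : `|dotv u v| <= vnorm u * vnorm v.
Proof.
rewrite /vnorm -sqrtrM ?dotv_ge0 // -sqrtr_sqr.
by apply: ler_wsqrtr; apply: CS2.
Qed.

Lemma vnorm_triangle n (u v : 'rV[R]_n) : vnorm (u + v) <= vnorm u + vnorm v.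
Proof.
have h1 : vnorm (u + v) ^+ 2 <= (vnorm u + vnorm v) ^+ 2.
  rewrite vnorm_sq dotvDl !(dotvC _ (u + v)) !dotvDl (dotvC u v).
  have := CS u v; rewrite -!vnorm_sq => h.
  have h' := ler_norm (dotv u v).
  rewrite sqrrD (dotvC v u) mulr2n; lra.
by rewrite -ler_sqr // ?nnegrE ?addr_ge0 ?vnorm_ge0.
Qed.

Lemma coord_le n (u : 'rV[R]_n) i : `|u ord0 i| <= vnorm u.
Proof.
rewrite /vnorm -sqrtr_sqr; apply: ler_wsqrtr.
rewrite /dotv (bigD1 i) //= expr2 lerDl.
by apply: sumr_ge0 => j _; rewrite -expr2 sqr_ge0.
Qed.

Lemma dot_mulU k d (U : 'M[R]_(k, d)) (v : 'rV[R]_k) (x : 'rV[R]_d) :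
  dotv (v *m U) x = dotv v (x *m U^T).
Proof.
rewrite /dotv.
under eq_bigr do rewrite mxE big_distrl /=.
rewrite exchange_big /=; apply: eq_bigr => i _.
rewrite mxE big_distrr /=; apply: eq_bigr => l _.
by rewrite mxE; ring.
Qed.

Lemma dotv_UU k d (U : 'M[R]_(k, d)) (y : 'rV[R]_k) :
  U *m U^T = 1%:M -> dotv (y *m U) (y *m U) = dotv y y.
Proof. by move=> hU; rewrite dot_mulU -mulmxA hU mulmx1. Qed.

Lemma vnorm_proj k d (U : 'M[R]_(k, d)) (x : 'rV[R]_d) :
  U *m U^T = 1%:M -> vnorm (x *m U^T) <= vnorm x.
Proof.
move=> hU; set y := x *m U^T.
have h1 : vnorm y ^+ 2 <= vnorm y * vnorm x.
  rewrite vnorm_sq {2}/y -dot_mulU dotvC.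
  apply: le_trans (ler_norm _) _; apply: le_trans (CS _ _) _.
  by rewrite mulrC /vnorm dotv_UU.
have [y0|yp] := eqVneq (vnorm y) 0; first by rewrite y0; apply: vnorm_ge0.
have yp' : 0 < vnorm y by rewrite lt_def yp vnorm_ge0.
by move: h1; rewrite expr2 ler_pM2l.
Qed.

Lemma row_dot k d (U : 'M[R]_(k, d)) (x : 'rV[R]_d) i :
  dotv (row i U) x = (x *m U^T) ord0 i.
Proof. by rewrite mxE /dotv; apply: eq_bigr => l _; rewrite !mxE mulrC. Qed.

Lemma PiU_bound k d (U : 'M[R]_(k, d)) (w x : 'rV[R]_d) :
  U *m U^T = 1%:M -> `|dotv (PiU U w) x| <= vnorm (x *m U^T).
Proof.
move=> hU; rewrite /PiU; case: ifP => _.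
  rewrite /first_row; case: pickP => [i _|_].
    by rewrite row_dot coord_le.
  by rewrite /dotv big1 ?normr0 ?vnorm_ge0 // => l _; rewrite mxE mul0r.
rewrite dotvZl dot_mulU normrM.
apply: le_trans (ler_wpM2l (normr_ge0 _) (CS _ _)) _.
rewrite mulrA ger0_norm ?invr_ge0 ?vnorm_ge0 //.
have [y0|yp] := eqVneq (vnorm (w *m U^T)) 0.
  by rewrite y0 invr0 !mul0r vnorm_ge0.
by rewrite mulVf // mul1r.
Qed.

End Vec.


Section Real.
Variable R : realType.
Implicit Types x y a m s : R.

Lemma powR_le_max x y a : 0 <= x -> 0 <= y -> 0 <= a ->
  (x + y) `^ a <= 2 `^ a * (x `^ a + y `^ a).
Proof.
move=> x0 y0 a0.
wlog xy : x y x0 y0 / x <= y.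
  move=> H; have [xy|yx] := leP x y; first exact: H.
  by rewrite addrC [x `^ a + _]addrC; apply: H => //; apply: ltW.
have h1 : (x + y) `^ a <= (2 * y) `^ a.
  by apply: ge0_ler_powR => //; rewrite ?nnegrE ?addr_ge0 ?mulr_ge0 //; lra.
apply: le_trans h1 _; rewrite powRM //; apply: ler_wpM2l; first exact: powR_ge0.
by rewrite lerDr powR_ge0.
Qed.

Lemma sq_le_powR (M q : R) : 0 <= M -> 1 <= q -> M ^+ 2 <= 1 + M `^ (2 * q).
Proof.
move=> M0 q1; have [M1|M1] := leP M 1.
  have : M ^+ 2 <= 1 by rewrite expr2; nra.
  by move=> h; apply: le_trans h _; rewrite lerDl powR_ge0.
rewrite -(powR_mulrn 2 M0); apply: le_trans (_ : M `^ (2 * q) <= _); last by rewrite lerDr.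
by apply: ler_powR; [apply: ltW | rewrite -[X in X <= _]mulr1; apply: ler_wpM2l].
Qed.

Lemma ln_ineq a y : 0 < a -> 0 < y -> a * ln y <= y + a * ln a.
Proof.
move=> a0 y0.
have h := @le_ln1Dx R (y / a - 1).
have h' : -1 < y / a - 1 by have := divr_gt0 y0 a0; lra.
have := h h'; rewrite addrC subrK ln_div ?posrE // => h2.
have : a * (ln y - ln a) <= a * (y / a - 1) by apply: ler_wpM2l => //; apply: ltW.
have -> : a * (y / a - 1) = y - a by field; rewrite gt_eqF.
lra.
Qed.

Definition Dc (beta m : R) := 2 + expR (m / 2 * (ln (m / 2) + ln beta)).

Lemma poly_exp beta s m : 0 < beta -> 0 <= s -> 0 <= m ->
  1 + s `^ m <= Dc beta m * expR (s ^+ 2 / beta).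
Proof.
move=> b0 s0 m0.
have e1 : 1 <= expR (s ^+ 2 / beta) by rewrite -expR0 ler_expR; apply: divr_ge0; [exact: sqr_ge0 | exact: ltW].
have eE := expR_gt0 (m / 2 * (ln (m / 2) + ln beta)).
rewrite /Dc.
have [sz|sp] := eqVneq s 0.
  have : s `^ m <= 1 by rewrite sz /powR eqxx; case: (m == 0).
  move=> h; nra.
have [mz|mp] := eqVneq m 0.
  rewrite mz powRr0 in eE *; nra.
have s0' : 0 < s by rewrite lt_def sp s0.
have m0' : 0 < m by rewrite lt_def mp m0.
have key : s `^ m <= expR (m / 2 * (ln (m / 2) + ln beta)) * expR (s ^+ 2 / beta).
  rewrite -expRD /powR (negbTE sp) ler_expR.
  have := @ln_ineq (m / 2) (s ^+ 2 / beta) (divr_gt0 m0' (ltr0Sn _ 1)) (divr_gt0 (exprn_gt0 2 s0') b0).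
  rewrite (@ln_div R (s ^+ 2) beta) ?posrE ?exprn_gt0 // => h; rewrite lnXn // in h.
  have e : m / 2 * (ln s *+ 2 - ln beta) = m * ln s - m / 2 * ln beta.
    by rewrite mulr2n; field.
  rewrite e mulrDr in h *.
  set A := m * ln s in h *; set B := m / 2 * ln beta in h *.
  set C := m / 2 * ln (m / 2) in h *; lra.
nra.
Qed.

Lemma aux_sq (A M : R) : M ^+ 2 <= 1 + A ^+ 2 -> (A + 2 * M) ^+ 2 <= 8 + 10 * A ^+ 2.
Proof.
move=> h; have := sqr_ge0 (A - 2 * M).
have -> : (A + 2 * M) ^+ 2 = 2 * A ^+ 2 + 8 * M ^+ 2 - (A - 2 * M) ^+ 2 by ring.
lra.
Qed.

End Real.


Section F.
Variable R : realType.

Lemma sigma_bound (sigma : R -> R) Ls qbar z M :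
  PL_cond sigma Ls qbar -> `|z| <= M ->
  `|sigma z| <= `|Ls| * (M `^ qbar + 2 * M).
Proof.
move=> [s0 [q1 hL]] zM.
have M0 : 0 <= M := le_trans (normr_ge0 _) zM.
have := hL z 0; rewrite s0 !subr0 normr0 => h.
apply: le_trans h _.
have p0 : 0 `^ (qbar - 1) <= 1 by rewrite /powR eqxx; case: (_ == 0).
have X0 : 0 <= (`|z| `^ (qbar - 1) + 0 `^ (qbar - 1) + 1) * `|z|.
  by apply: mulr_ge0 => //; rewrite !addr_ge0 ?powR_ge0.
apply: le_trans (_ : `|Ls| * ((`|z| `^ (qbar - 1) + 0 `^ (qbar - 1) + 1) * `|z|) <= _).
  by rewrite -mulrA; apply: ler_wpM2r => //; apply: ler_norm.
apply: ler_wpM2l; first exact: normr_ge0.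
apply: le_trans (_ : `|z| `^ qbar + 2 * `|z| <= _); last first.
  apply: lerD; last by apply: ler_wpM2l.
  by apply: ge0_ler_powR; rewrite ?nnegrE //; lra.
have e : `|z| `^ (qbar - 1) * `|z| <= `|z| `^ qbar.
  have [z0|zp] := eqVneq `|z| 0; first by rewrite z0 mulr0 powR_ge0.
  have zp' : 0 < `|z| by rewrite lt_def zp normr_ge0.
  by rewrite mulrC mulr_powRB1 //; lra.
have e2 : 0 `^ (qbar - 1) * `|z| <= `|z| by rewrite -[X in _ <= X]mul1r; apply: ler_wpM2r.
rewrite !mulrDl mul1r; lra.
Qed.

Lemma sum_abs_le N (astar : 'I_N -> R) (S : {set 'I_N}) ra :
  (forall j, j \notin S -> astar j = 0) ->
  vnorm (\row_j astar j) <= ra / Num.sqrt (#|S|%:R) ->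
  \sum_j `|astar j| <= `|ra|.
Proof.
move=> hS ha.
set ind := \row_j ((j \in S)%:R : R); set av := \row_j `|astar j|.
have e1 : \sum_j `|astar j| = dotv ind av.
  rewrite /dotv; apply: eq_bigr => j _; rewrite !mxE.
  by case: (boolP (j \in S)) => jS; rewrite ?mul1r // hS // normr0 mulr0.
have e2 : vnorm ind = Num.sqrt (#|S|%:R).
  rewrite /vnorm /dotv; congr Num.sqrt.
  transitivity (\sum_(j in S) (1 : R)); last by rewrite sumr_const.
  rewrite [RHS]big_mkcond /=; apply: eq_bigr => j _; rewrite !mxE.
  by case: (j \in S); rewrite ?mulr1 ?mulr0.
have e3 : vnorm av = vnorm (\row_j astar j).
  rewrite /vnorm /dotv; congr Num.sqrt; apply: eq_bigr => j _; rewrite !mxE.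
  by rewrite -!expr2 real_normK ?num_real.
rewrite e1; apply: le_trans (ler_norm _) _; apply: le_trans (CS _ _) _.
rewrite e2 e3.
have [Sz|Sp] := eqVneq (#|S|%:R : R) 0.
  by rewrite Sz sqrtr0 mul0r normr_ge0.
have sp : 0 < Num.sqrt (#|S|%:R : R) by rewrite sqrtr_gt0 lt_def Sp ler0n.
rewrite mulrC -ler_pdivlMr //; apply: le_trans ha _.
by apply: ler_wpM2r; [rewrite invr_ge0 ltW | apply: ler_norm].
Qed.

Lemma row_PiUW k d N (U : 'M[R]_(k, d)) (W : 'M[R]_(N, d)) j x :
  dotv (row j (PiUW U W)) x = dotv (PiU U (row j W)) x.
Proof. by apply: eq_bigr => l _; rewrite !mxE. Qed.

Lemma f_bound k d N (U : 'M[R]_(k, d)) (W : 'M[R]_(N, d)) (b astar : 'I_N -> R)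
  (S : {set 'I_N}) (sigma : R -> R) Ls qbar rb ra (x : 'rV[R]_d) :
  U *m U^T = 1%:M ->
  (forall j, `|b j| <= rb) ->
  (forall j, j \notin S -> astar j = 0) ->
  vnorm (\row_j astar j) <= ra / Num.sqrt (#|S|%:R) ->
  PL_cond sigma Ls qbar -> 0 <= rb ->
  `|netf sigma x astar (PiUW U W) b| <=
     `|ra| * (`|Ls| * ((vnorm (x *m U^T) + rb) `^ qbar + 2 * (vnorm (x *m U^T) + rb))).
Proof.
move=> hU hb hS ha hPL rb0.
set G := `|Ls| * _.
have G0 : 0 <= G.
  apply: mulr_ge0; first exact: normr_ge0.
  apply: addr_ge0; first exact: powR_ge0.
  by apply: mulr_ge0 => //; apply: addr_ge0 => //; apply: vnorm_ge0.
rewrite /netf; apply: le_trans (ler_norm_sum _ _ _) _.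
apply: le_trans (_ : \sum_j `|astar j| * G <= _).
  apply: ler_sum => j _; rewrite normrM; apply: ler_wpM2l; first exact: normr_ge0.
  apply: sigma_bound => //.
  apply: le_trans (ler_normD _ _) _; apply: lerD => //.
  by rewrite row_PiUW; apply: PiU_bound.
rewrite -mulr_suml; apply: ler_wpM2r => //.
exact: sum_abs_le hS ha.
Qed.

End F.


Section C.
Variable R : realType.

Lemma combine (A1 A2 F H M' X Y T X2 Y2 Q P Dq Dp E : R) :
 0 <= A1 -> 0 <= A2 -> 1 <= X -> 1 <= Y -> 1 <= X2 -> 1 <= Y2 -> 0 <= Q -> 0 <= P ->
 0 <= E ->
 F ^+ 2 <= A1 * (8 + 10 * M') -> M' <= Q ^+ 2 * X * Y ->
 H ^+ 2 <= 2 * A2 * (1 + T) -> T <= P * X2 * Y2 ->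
 X <= Dq * E -> X2 <= Dp * E ->
 (F - H) ^+ 2 <= (A1 * Y * (2 * (8 + 10 * Q ^+ 2) * Dq) + A2 * Y2 * (4 * (1 + P) * Dp)) * E.
Proof.
move=> A10 A20 X1 Y1 X21 Y21 Q0 P0 E0 hF hM hH hT hX hX2.
have XY : 1 <= X * Y by nra.
have XY2 : 1 <= X2 * Y2 by nra.
have s1 : 8 + 10 * M' <= (8 + 10 * Q ^+ 2) * X * Y.
  have : Q ^+ 2 * X * Y = Q ^+ 2 * (X * Y) by ring.
  have : 0 <= Q ^+ 2 by apply: sqr_ge0.
  nra.
have s2 : F ^+ 2 <= A1 * (8 + 10 * Q ^+ 2) * Y * X.
  apply: le_trans hF _; have := ler_wpM2l A10 s1.
  by have -> : A1 * ((8 + 10 * Q ^+ 2) * X * Y) = A1 * (8 + 10 * Q ^+ 2) * Y * X by ring.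
have s3 : A1 * (8 + 10 * Q ^+ 2) * Y * X <= A1 * (8 + 10 * Q ^+ 2) * Y * (Dq * E).
  apply: ler_wpM2l => //; apply: mulr_ge0; last lra.
  apply: mulr_ge0 => //; apply: addr_ge0 => //; apply: mulr_ge0 => //; exact: sqr_ge0.
have t1 : 1 + T <= (1 + P) * X2 * Y2.
  have : P * X2 * Y2 = P * (X2 * Y2) by ring.
  nra.
have t2 : H ^+ 2 <= 2 * A2 * (1 + P) * Y2 * X2.
  apply: le_trans hH _; have := ler_wpM2l (_ : 0 <= 2 * A2) t1.
  have -> : 2 * A2 * ((1 + P) * X2 * Y2) = 2 * A2 * (1 + P) * Y2 * X2 by ring.
  by apply; lra.
have t3 : 2 * A2 * (1 + P) * Y2 * X2 <= 2 * A2 * (1 + P) * Y2 * (Dp * E).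
  apply: ler_wpM2l => //.
  have : 0 <= 2 * A2 by lra.
  move=> h2; apply: mulr_ge0; [apply: mulr_ge0 => //; lra | lra].
have sq : (F - H) ^+ 2 <= 2 * F ^+ 2 + 2 * H ^+ 2.
  have := sqr_ge0 (F + H); rewrite !expr2; nra.
have -> : (A1 * Y * (2 * (8 + 10 * Q ^+ 2) * Dq) + A2 * Y2 * (4 * (1 + P) * Dp)) * E
  = 2 * (A1 * (8 + 10 * Q ^+ 2) * Y * (Dq * E)) + 2 * (2 * A2 * (1 + P) * Y2 * (Dp * E)).
  by ring.
lra.
Qed.

End C.


Section B.
Variable R : realType.

Lemma sqpow (x a : R) : 0 <= x -> (x `^ a) ^+ 2 = x `^ (2 * a).
Proof. by move=> x0; rewrite mulrC powRrM powR_mulrn // powR_ge0. Qed.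

Lemma two_pow_ge1 (a : R) : 0 <= a -> 1 <= 2 `^ a.
Proof.
by move=> a0; have := @ler_powR R 2 (_ : 1 <= 2) 0 a a0; rewrite powRr0; apply; lra.
Qed.

Lemma sum3_pow (s e r a : R) : 0 <= s -> 0 <= e -> 0 <= r -> 0 <= a ->
  (s + e + r) `^ a <= (2 `^ a) ^+ 2 * ((1 + s `^ a) * (1 + e `^ a + r `^ a)).
Proof.
move=> s0 e0 r0 a0.
have Q1 := two_pow_ge1 a0.
have h1 := powR_le_max (addr_ge0 s0 e0) r0 a0.
have h2 := powR_le_max s0 e0 a0.
have ps := powR_ge0 s a; have pe := powR_ge0 e a; have pr := powR_ge0 r a.
apply: le_trans h1 _.
have h3 : 2 `^ a * ((s + e) `^ a + r `^ a) <= 2 `^ a * (2 `^ a * (s `^ a + e `^ a) + r `^ a).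
  by apply: ler_wpM2l; [lra | lra].
apply: le_trans h3 _.
have h4 : 2 `^ a * (2 `^ a * (s `^ a + e `^ a) + r `^ a) <= (2 `^ a) ^+ 2 * (s `^ a + e `^ a + r `^ a).
  have : r `^ a <= 2 `^ a * r `^ a by rewrite -[X in X <= _]mul1r; apply: ler_wpM2r.
  rewrite expr2; nra.
apply: le_trans h4 _; apply: ler_wpM2l; first exact: sqr_ge0.
nra.
Qed.

Lemma sum2_pow (s e a : R) : 0 <= s -> 0 <= e -> 0 <= a ->
  (s + e) `^ a <= 2 `^ a * ((1 + s `^ a) * (1 + e `^ a)).
Proof.
move=> s0 e0 a0.
have h2 := powR_le_max s0 e0 a0.
have ps := powR_ge0 s a; have pe := powR_ge0 e a.
apply: le_trans h2 _; apply: ler_wpM2l; first exact: powR_ge0.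
nra.
Qed.


Definition Bq (beta q : R) := 2 * (8 + 10 * (2 `^ (2 * q)) ^+ 2) * Dc beta (2 * q).
Definition Bp (beta p : R) := 4 * (1 + 2 `^ (2 * p)) * Dc beta (2 * p).

Lemma point_bound k d N (U : 'M[R]_(k, d)) (W : 'M[R]_(N, d)) (b astar : 'I_N -> R)
  (S : {set 'I_N}) (sigma : R -> R) (Ls qbar : R) (h : 'rV[R]_k -> R) (Lh p : R)
  (eps rb ra beta : R) (x delta : 'rV[R]_d) :
  U *m U^T = 1%:M ->
  (forall j, `|b j| <= rb) ->
  (forall j, j \notin S -> astar j = 0) ->
  vnorm (\row_j astar j) <= ra / Num.sqrt (#|S|%:R) ->
  0 <= eps -> 0 <= p ->
  (forall z, `|h z| <= Lh * (1 + vnorm z `^ p)) ->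
  PL_cond sigma Ls qbar -> vnorm delta <= eps -> 0 < beta ->
  (netf sigma (x + delta) astar (PiUW U W) b - h ((x + delta) *m U^T)) ^+ 2 <=
  (Ls ^+ 2 * ra ^+ 2 * (1 + eps `^ (2 * qbar) + rb `^ (2 * qbar)) * Bq beta qbar
   + Lh ^+ 2 * (1 + eps `^ (2 * p)) * Bp beta p) * expR (vnorm (x *m U^T) ^+ 2 / beta).
Proof.
move=> hU hb hS ha e0 p0 hh hPL hd b0.
have q1 : 1 <= qbar by case: hPL => _ [].
have q0 : 0 <= 2 * qbar by lra.
have p20 : 0 <= 2 * p by lra.
set s := vnorm (x *m U^T); set t := vnorm ((x + delta) *m U^T).
have s0 : 0 <= s by apply: vnorm_ge0.
have t0 : 0 <= t by apply: vnorm_ge0.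
have ts : t <= s + eps.
  rewrite /t mulmxDl; apply: le_trans (vnorm_triangle _ _) _; apply: lerD => //.
  exact: le_trans (vnorm_proj _ hU) hd.
set F := netf _ _ _ _ _; set H := h _.
have Lh0 : 0 <= Lh.
  have := hh ((x + delta) *m U^T); have := powR_ge0 (vnorm ((x + delta) *m U^T)) p.
  have := normr_ge0 (h ((x + delta) *m U^T)); nra.
rewrite -/t in hh.
have hH0 : `|H| <= Lh * (1 + t `^ p) by apply: hh.
have tp := powR_ge0 t p.
have hH : H ^+ 2 <= 2 * Lh ^+ 2 * (1 + t `^ (2 * p)).
  rewrite -sqpow //.
  have : H ^+ 2 <= (Lh * (1 + t `^ p)) ^+ 2.
    rewrite -real_normK ?num_real //; have := normr_ge0 H; nra.
  move=> hh2; apply: le_trans hh2 _; rewrite exprMn.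
  have := sqr_ge0 (t `^ p - 1); have := sqr_ge0 Lh; rewrite !expr2; nra.
have hT : t `^ (2 * p) <= 2 `^ (2 * p) * ((1 + s `^ (2 * p)) * (1 + eps `^ (2 * p))).
  apply: le_trans (sum2_pow s0 e0 p20).
  by apply: ge0_ler_powR; rewrite ?nnegrE // addr_ge0.
have [M' [hF hM]] : exists M', F ^+ 2 <= Ls ^+ 2 * ra ^+ 2 * (8 + 10 * M') /\
    M' <= (2 `^ (2 * qbar)) ^+ 2 * (1 + s `^ (2 * qbar)) * (1 + eps `^ (2 * qbar) + rb `^ (2 * qbar)).
  have X0 := powR_ge0 s (2 * qbar); have Y0 := powR_ge0 eps (2 * qbar).
  have Z0 := powR_ge0 rb (2 * qbar).
  have [rb0|rbn] := leP 0 rb; last first.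
    have F0 : F = 0.
      by rewrite /F /netf big1 // => j _; have := le_lt_trans (le_trans (normr_ge0 (b j)) (hb j)) rbn; rewrite ltxx.
    exists 0; rewrite F0 expr0n /= mulr0 addr0; split.
      by apply: mulr_ge0 => //; apply: mulr_ge0; apply: sqr_ge0.
    apply: mulr_ge0; last by rewrite !addr_ge0.
    by apply: mulr_ge0; [apply: sqr_ge0 | rewrite addr_ge0].
  set M := t + rb.
  have M0 : 0 <= M by rewrite /M addr_ge0.
  exists (M `^ (2 * qbar)); split.
    have hf := f_bound W (x + delta) hU hb hS ha hPL rb0.
    rewrite -/t -/M -/F in hf.
    have G0 : 0 <= M `^ qbar + 2 * M by apply: addr_ge0; [apply: powR_ge0 | apply: mulr_ge0].
    have hf2 : F ^+ 2 <= Ls ^+ 2 * ra ^+ 2 * (M `^ qbar + 2 * M) ^+ 2.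
      rewrite -real_normK ?num_real //.
      have -> : Ls ^+ 2 * ra ^+ 2 * (M `^ qbar + 2 * M) ^+ 2
        = (`|ra| * (`|Ls| * (M `^ qbar + 2 * M))) ^+ 2.
        by rewrite !exprMn !real_normK ?num_real //; ring.
      have : 0 <= `|ra| * (`|Ls| * (M `^ qbar + 2 * M)).
        by apply: mulr_ge0 => //; apply: mulr_ge0.
      move=> hG; rewrite !expr2; apply: ler_pM => //.
    apply: le_trans hf2 _; apply: ler_wpM2l.
      by apply: mulr_ge0; apply: sqr_ge0.
    have hsq := sq_le_powR M0 q1.
    have e2 := sqpow qbar M0.
    by rewrite -e2 in hsq *; apply: aux_sq.
  apply: le_trans (_ : (s + eps + rb) `^ (2 * qbar) <= _).
    by apply: ge0_ler_powR; rewrite ?nnegrE ?addr_ge0 // /M lerD2r.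
  by apply: le_trans (sum3_pow s0 e0 rb0 q0) _; rewrite -!mulrA.
rewrite /Bq /Bp.
apply: (@combine R (Ls ^+ 2 * ra ^+ 2) (Lh ^+ 2) F H M' (1 + s `^ (2 * qbar))
    (1 + eps `^ (2 * qbar) + rb `^ (2 * qbar)) (t `^ (2 * p)) (1 + s `^ (2 * p))
    (1 + eps `^ (2 * p)) (2 `^ (2 * qbar)) (2 `^ (2 * p)) (Dc beta (2 * qbar)) (Dc beta (2 * p))
    (expR (s ^+ 2 / beta))) => //.
all: first [ by apply: mulr_ge0; apply: sqr_ge0 | exact: sqr_ge0 | by rewrite lerDl powR_ge0
  | by rewrite -addrA lerDl addr_ge0 ?powR_ge0 | exact: powR_ge0 | exact: expR_ge0
  | by rewrite mulrA in hT | exact: poly_exp | idtac ].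
Qed.

End B.


Section P.
Variable R : realType.

Lemma exp_avg k (hk : (0 < k)%N) (f : 'I_k -> R) :
  expR ((\sum_i f i) / k%:R) <= \sum_i expR (f i).
Proof.
set i0 := Order.arg_max (Ordinal hk) xpredT f.
have hmax : forall i, f i <= f i0.
  by move=> i; rewrite /i0; case: (@arg_maxP _ R _ (Ordinal hk) xpredT f) => // j _ H; apply: H.
have kp : 0 < (k%:R : R) by rewrite ltr0n.
have h1 : (\sum_i f i) / k%:R <= f i0.
  rewrite ler_pdivrMr //.
  apply: le_trans (_ : \sum_(i < k) f i0 <= _); first by apply: ler_sum => i _.
  by rewrite sumr_const card_ord mulr_natr.
apply: le_trans (_ : expR (f i0) <= _); first by rewrite ler_expR.
rewrite (bigD1 i0) //= lerDl; apply: sumr_ge0 => i _; exact: expR_ge0.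
Qed.

Lemma unit_row k d (U : 'M[R]_(k, d)) i : U *m U^T = 1%:M -> vnorm (row i U) = 1.
Proof.
move=> hU; rewrite /vnorm row_dot -row_mul hU !mxE eqxx /=.
by rewrite sqrtr1.
Qed.


Lemma vnorm0 n : vnorm (0 : 'rV[R]_n) = 0.
Proof. by rewrite /vnorm /dotv big1 ?sqrtr0 // => i _; rewrite mxE mul0r. Qed.

Lemma ea_ge0 k d N (sigma : R -> R) (astar : 'I_N -> R) (U : 'M[R]_(k, d))
  (W : 'M[R]_(N, d)) (b : 'I_N -> R) (h : 'rV[R]_k -> R) (rz : R) :
  0 <= rz -> (0 <= eps_approx sigma astar U W b h rz)%E.
Proof.
move=> rz0; apply: le_trans (_ : ((`|netf sigma 0 astar (PiUW U W) b - h (0 *m U^T)|)%:E <= _)%E).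
  by rewrite lee_fin.
by apply: ereal_sup_ubound; exists 0 => //=; rewrite mul0mx vnorm0.
Qed.

Lemma adv_ge0 k d N (sigma : R -> R) (astar : 'I_N -> R) (U : 'M[R]_(k, d))
  (W : 'M[R]_(N, d)) (b : 'I_N -> R) (h : 'rV[R]_k -> R) (eps : R) x :
  0 <= eps -> (0 <= adv_loss sigma astar U W b h eps x)%E.
Proof.
move=> e0; apply: le_trans (_ : (((netf sigma (x + 0) astar (PiUW U W) b
   - h ((x + 0) *m U^T)) ^+ 2)%:E <= _)%E).
  by rewrite lee_fin sqr_ge0.
by apply: ereal_sup_ubound; exists 0 => //=; rewrite vnorm0.
Qed.

End P.


Section Q.
Variable R : realType.

Lemma adv_point (K : R) k (hk : (0 < k)%N) d N (U : 'M[R]_(k, d)) (W : 'M[R]_(N, d))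
  (b astar : 'I_N -> R)
  (S : {set 'I_N}) (sigma : R -> R) (Ls qbar : R) (h : 'rV[R]_k -> R) (Lh p : R)
  (eps rb ra rz alpha : R) (x : 'rV[R]_d) :
  0 < K ->
  U *m U^T = 1%:M ->
  (forall j, `|b j| <= rb) ->
  (forall j, j \notin S -> astar j = 0) ->
  vnorm (\row_j astar j) <= ra / Num.sqrt (#|S|%:R) ->
  0 <= eps -> Num.max 1 (2 * eps) <= rz -> 0 <= p ->
  (forall z, `|h z| <= Lh * (1 + vnorm z `^ p)) ->
  PL_cond sigma Ls qbar ->
  alpha = k%:R * (2 * K) ^+ 2 ->
  (adv_loss sigma astar U W b h eps x <=
   eps_approx sigma astar U W b h rz * eps_approx sigma astar U W b h rz +
   ((Ls ^+ 2 * ra ^+ 2 * (1 + eps `^ (2 * qbar) + rb `^ (2 * qbar)) * Bq (2 * alpha) qbar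
    + Lh ^+ 2 * (1 + eps `^ (2 * p)) * Bp (2 * alpha) p)
    * expR (- (8 * alpha)^-1 * rz ^+ 2)
    * \sum_i expR (dotv (row i U) x ^+ 2 / (2 * K) ^+ 2))%:E)%E.
Proof.
move=> K0 hU hb hS ha e0 hrz p0 hh hPL halpha.
have rz1 : 1 <= rz by apply: le_trans hrz; rewrite le_max lexx.
have rz2 : 2 * eps <= rz by apply: le_trans hrz; rewrite le_max lexx orbT.
have ap : 0 < alpha by rewrite halpha mulr_gt0 ?ltr0n ?exprn_gt0 ?mulr_gt0.
set B0 := (Ls ^+ 2 * ra ^+ 2 * _ * _ + _)%R.
have q1 : 1 <= qbar by case: hPL => _ [].
have Lh0 : 0 <= Lh.
  have := hh 0; have := powR_ge0 (vnorm (0 : 'rV[R]_k)) p.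
  have := normr_ge0 (h 0); nra.
have B00 : 0 <= B0.
  apply: addr_ge0; apply: mulr_ge0.
  - apply: mulr_ge0; first by apply: mulr_ge0; apply: sqr_ge0.
    by rewrite !addr_ge0 ?powR_ge0.
  - rewrite /Bq; apply: mulr_ge0; last by rewrite /Dc addr_ge0 ?expR_ge0.
    by apply: mulr_ge0 => //; rewrite addr_ge0 // mulr_ge0 // sqr_ge0.
  - by apply: mulr_ge0; [apply: sqr_ge0 | rewrite addr_ge0 ?powR_ge0].
  - rewrite /Bp; apply: mulr_ge0; last by rewrite /Dc addr_ge0 ?expR_ge0.
    by apply: mulr_ge0 => //; rewrite addr_ge0 ?powR_ge0.
set G := \sum_i _.
have G0 : 0 <= G by apply: sumr_ge0 => i _; apply: expR_ge0.
have rest0 : 0 <= B0 * expR (- (8 * alpha)^-1 * rz ^+ 2) * G.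
  by rewrite mulr_ge0 // mulr_ge0 // expR_ge0.
have ea0 := @ea_ge0 R k d N sigma astar U W b h rz (le_trans ler01 rz1).
apply: ge_ereal_sup => _ [delta hd <-].
set F := netf _ _ _ _ _; set H := h _.
set t := vnorm ((x + delta) *m U^T).
have [trz|trz] := leP t rz.
  apply: le_trans (_ : (eps_approx sigma astar U W b h rz * eps_approx sigma astar U W b h rz <= _)%E); last first.
    by apply: leeDl; rewrite lee_fin.
  have hub : ((`|F - H|)%:E <= eps_approx sigma astar U W b h rz)%E.
    by apply: ereal_sup_ubound; exists (x + delta).
  rewrite -real_normK ?num_real // expr2 EFinM.
  by apply: lee_pmul => //; rewrite lee_fin.
apply: le_trans (_ : ((B0 * expR (- (8 * alpha)^-1 * rz ^+ 2) * G)%:E <= _)%E); last first.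
  by apply: leeDr; apply: mule_ge0.
rewrite lee_fin.
have hpb := @point_bound R k d N U W b astar S sigma Ls qbar h Lh p eps rb ra (2 * alpha) x delta hU hb hS ha e0 p0 hh hPL hd.
apply: le_trans (hpb _) _; first by rewrite mulr_gt0.
rewrite -/B0 -mulrA; apply: ler_wpM2l => //.
set s := vnorm (x *m U^T).
have s0 : 0 <= s by apply: vnorm_ge0.
have ts : t <= s + eps.
  rewrite /t mulmxDl; apply: le_trans (vnorm_triangle _ _) _; apply: lerD => //.
  exact: le_trans (vnorm_proj _ hU) hd.
have srz : rz / 2 <= s by lra.
have e1 : expR (s ^+ 2 / (2 * alpha)) <= expR (- (8 * alpha)^-1 * rz ^+ 2) * expR (s ^+ 2 / alpha).
  rewrite -expRD ler_expR.
  have : (rz / 2) ^+ 2 <= s ^+ 2.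
    by rewrite ler_sqr ?nnegrE //; lra.
  move=> hs.
  have -> : - (8 * alpha)^-1 * rz ^+ 2 + s ^+ 2 / alpha
          = s ^+ 2 / (2 * alpha) + (s ^+ 2 - (rz / 2) ^+ 2) / (2 * alpha).
    by field; rewrite gt_eqF.
  rewrite lerDl; apply: divr_ge0; first lra.
  by rewrite mulr_ge0 // ltW.
apply: le_trans e1 _; apply: ler_wpM2l; first exact: expR_ge0.
have e2 : s ^+ 2 / alpha = (\sum_i (dotv (row i U) x ^+ 2 / (2 * K) ^+ 2)) / k%:R.
  rewrite /s vnorm_sq /dotv -mulr_suml halpha.
  have -> : \sum_(i < k) (x *m U^T) ord0 i * (x *m U^T) ord0 i = \sum_i dotv (row i U) x ^+ 2.
    by apply: eq_bigr => i _; rewrite row_dot expr2.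
  field; rewrite ?pnatr_eq0 -?lt0n ?hk ?expf_neq0 ?mulf_neq0 ?gt_eqF //.
rewrite e2; exact: exp_avg.
Qed.

End Q.


Section M.
Variable R : realType.

Lemma meas_dot (dT : measure_display) (T : measurableType dT) d (X : T -> 'rV[R]_d)
  (v : 'rV[R]_d) :
  (forall i, measurable_fun setT (fun w => X w ord0 i)) ->
  measurable_fun setT (fun w => dotv v (X w)).
Proof.
move=> hX; rewrite /dotv; apply: measurable_sum => l.
by apply: measurable_funM; [exact: measurable_cst | exact: hX].
Qed.

Lemma meas_expdot (dT : measure_display) (T : measurableType dT) d (X : T -> 'rV[R]_d)
  (v : 'rV[R]_d) (c : R) :
  (forall i, measurable_fun setT (fun w => X w ord0 i)) ->
  measurable_fun setT (fun w => expR (dotv v (X w) ^+ 2 / c)).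
Proof.
move=> hX; apply: measurableT_comp; first exact: measurable_expR.
apply: measurable_funM; last exact: measurable_cst.
by apply: measurable_funX; apply: meas_dot.
Qed.

Lemma int_G (K : R) (dT : measure_display) (T : measurableType dT) (P : probability T R)
  k d (X : T -> 'rV[R]_d) (U : 'M[R]_(k, d)) i :
  0 < K -> U *m U^T = 1%:M ->
  (forall i, measurable_fun setT (fun w => X w ord0 i)) ->
  (subg_norm_vec P X <= K%:E)%E ->
  (\int[P]_w (expR (dotv (row i U) (X w) ^+ 2 / (2 * K) ^+ 2))%:E <= 2%:E)%E.
Proof.
move=> K0 hU hX hsub.
have hps : (psi2norm P (fun w => dotv (row i U) (X w)) <= K%:E)%E.
  apply: le_trans hsub; apply: ereal_sup_ubound; exists (row i U) => //.
  exact: unit_row.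
have hlt : (psi2norm P (fun w => dotv (row i U) (X w)) < (2 * K)%:E)%E.
  by apply: le_lt_trans hps _; rewrite lte_fin; lra.
have [y [t [t0 hint] ety] hy] := ereal_inf_lt hlt; rewrite -ety lte_fin in hy.
have tlt := hy.
apply: le_trans hint.
apply: ge0_le_integral => //.
- by apply/measurable_EFinP; apply: meas_expdot.
- by apply/measurable_EFinP; apply: meas_expdot.
move=> w _; rewrite lee_fin ler_expR; apply: ler_wpM2l; first exact: sqr_ge0.
rewrite lef_pV2 ?posrE ?exprn_gt0 ?mulr_gt0 //.
by rewrite ler_sqr ?nnegrE; lra.
Qed.

End M.

Unset Implicit Arguments.

Theorem lemmaD (R : realType) (K : R) (hK : 0 < K) (k : nat) (hk : (0 < k)%N) :
  exists c : R, 0 < c /\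
  exists (Cq : R -> R) (Cpk : R -> R),
  forall (dT : measure_display) (T : measurableType dT) (P : probability T R)
    (d N : nat) (X : T -> 'rV[R]_d)
    (U : 'M[R]_(k, d)) (W : 'M[R]_(N, d)) (b astar : 'I_N -> R)
    (S : {set 'I_N}) (sigma : R -> R) (Ls qbar : R)
    (h : 'rV[R]_k -> R) (Lh p : R) (eps rb ra rz : R),
  (* U has orthonormal rows *)
  U *m U^T = 1%:M ->
  (* W has unit-norm rows *)
  (forall j, vnorm (row j W) = 1) ->
  (forall j, `|b j| <= rb) ->
  (forall j, j \notin S -> astar j = 0) ->
  vnorm (\row_j astar j) <= ra / Num.sqrt (#|S|%:R) ->
  0 <= eps ->
  Num.max 1 (2 * eps) <= rz ->
  0 <= p ->
  (forall z, `|h z| <= Lh * (1 + vnorm z `^ p)) ->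
  PL_cond sigma Ls qbar ->
  (* x is a zero-mean random vector with subGaussian norm at most K *)
  (forall i, measurable_fun setT (fun w => X w ord0 i)) ->
  (forall i, P.-integrable setT (fun w => (X w ord0 i)%:E)) ->
  (forall i, (\int[P]_w (X w ord0 i)%:E = 0)%E) ->
  (subg_norm_vec P X <= K%:E)%E ->
  (* the objective is a random variable (the expectation is well defined) *)
  measurable_fun setT (fun w : T => adv_loss sigma astar U W b h eps (X w)) ->
  (\int[P]_w adv_loss sigma astar U W b h eps (X w)
   <= eps_approx sigma astar U W b h rz * eps_approx sigma astar U W b h rz
      + ((Cq qbar * Ls ^+ 2 * ra ^+ 2 * (1 + eps `^ (2 * qbar) + rb `^ (2 * qbar))
          + Cpk p * Lh ^+ 2 * (1 + eps `^ (2 * p))) * expR (- c * rz ^+ 2))%:E)%E.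
Proof.
pose alpha := k%:R * (2 * K) ^+ 2.
have ap : 0 < alpha by rewrite /alpha mulr_gt0 ?ltr0n ?exprn_gt0 ?mulr_gt0.
exists (8 * alpha)^-1; split; first by rewrite invr_gt0 mulr_gt0.
exists (fun q => 2 * k%:R * Bq (2 * alpha) q), (fun q => 2 * k%:R * Bp (2 * alpha) q).
move=> dT T P d N X U W b astar S sigma Ls qbar h Lh p eps rb ra rz
  hU _ hb hS ha e0 hrz p0 hh hPL hX _ _ hsub hmeas.
have rz1 : 1 <= rz by apply: le_trans hrz; rewrite le_max lexx.
set ea := eps_approx _ _ _ _ _ _ rz.
have ea0 : (0 <= ea)%E := @ea_ge0 R k d N sigma astar U W b h rz (le_trans ler01 rz1).
set B0 := (Ls ^+ 2 * ra ^+ 2 * (1 + eps `^ (2 * qbar) + rb `^ (2 * qbar)) * Bq (2 * alpha) qbar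
    + Lh ^+ 2 * (1 + eps `^ (2 * p)) * Bp (2 * alpha) p).
set C0 := B0 * expR (- (8 * alpha)^-1 * rz ^+ 2).
have hpt := fun x => @adv_point R K k hk d N U W b astar S sigma Ls qbar h Lh p eps rb ra rz alpha x
  hK hU hb hS ha e0 hrz p0 hh hPL erefl.
rewrite -/ea -/B0 -/C0 in hpt.
have [eay|eany] := eqVneq ea +oo%E.
  by rewrite eay mulyy addye // leey.
have eafin : ea \is a fin_num by rewrite ge0_fin_numE // lt_neqAle eany leey.
set a := fine ea.
have eaE : ea = a%:E by rewrite fineK.
have a0 : 0 <= a by rewrite -lee_fin -eaE.
have B00 : 0 <= B0.
  have q1 : 1 <= qbar by case: hPL => _ [].
  have Lh0 : 0 <= Lh.
    have := hh 0; have := powR_ge0 (vnorm (0 : 'rV[R]_k)) p.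
    have := normr_ge0 (h 0); nra.
  apply: addr_ge0; apply: mulr_ge0.
  - apply: mulr_ge0; first by apply: mulr_ge0; apply: sqr_ge0.
    by rewrite !addr_ge0 ?powR_ge0.
  - rewrite /Bq; apply: mulr_ge0; last by rewrite /Dc addr_ge0 ?expR_ge0.
    by apply: mulr_ge0 => //; rewrite addr_ge0 // mulr_ge0 // sqr_ge0.
  - by apply: mulr_ge0; [apply: sqr_ge0 | rewrite addr_ge0 ?powR_ge0].
  - rewrite /Bp; apply: mulr_ge0; last by rewrite /Dc addr_ge0 ?expR_ge0.
    by apply: mulr_ge0 => //; rewrite addr_ge0 ?powR_ge0.
have C00 : 0 <= C0 by rewrite mulr_ge0 // expR_ge0.
pose G i w := expR (dotv (row i U) (X w) ^+ 2 / (2 * K) ^+ 2).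
have mG : forall i, measurable_fun setT (G i) by move=> i; apply: meas_expdot.
have G0 : forall i w, 0 <= G i w by move=> i w; apply: expR_ge0.
apply: le_trans (_ : (\int[P]_w ((a * a)%:E + (C0 * \sum_i G i w)%:E) <= _)%E).
  apply: ge0_le_integral => //.
  - by move=> w _; apply: adv_ge0.
  - apply: emeasurable_funD; first exact: measurable_cst.
    apply/measurable_EFinP; apply: measurable_funM; first exact: measurable_cst.
    by apply: measurable_sum.
  - by move=> w _; have := hpt (X w); rewrite eaE -EFinM.
rewrite ge0_integralD //; last first.
all: try by (apply/measurable_EFinP; apply: measurable_funM; [exact: measurable_cst | apply: measurable_sum]).
all: try by (move=> w _; rewrite lee_fin mulr_ge0 // sumr_ge0).
all: try exact: measurable_cst.
all: try by (move=> w _; rewrite lee_fin mulr_ge0).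
have -> : (\int[P]_w (a * a)%:E = (a * a)%:E)%E.
  have := integral_cst P (measurableT) ((a * a)%:E); move=> ->.
  by rewrite -[X in (_ * X)%E]/(P setT) probability_setT mule1.
under eq_integral do rewrite EFinM.
rewrite ge0_integralZl_EFin //; last first.
all: try by (apply/measurable_EFinP; apply: measurable_sum).
all: try by (move=> w _; rewrite lee_fin sumr_ge0).
under eq_integral do rewrite -sumEFin.
rewrite ge0_integral_sum //; last first.
all: try by (move=> i w _; rewrite lee_fin).
all: try by (move=> i; apply/measurable_EFinP).
rewrite eaE -EFinM; apply: leeD2l.
apply: le_trans (_ : (C0%:E * (2 * k%:R)%:E <= _)%E).
  apply: lee_wpmul2l; first by rewrite lee_fin.
  apply: le_trans (_ : (\sum_(i < k) 2%:E <= _)%E).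
    by apply: lee_sum => i _; apply: int_G.
  by rewrite sumEFin sumr_const card_ord lee_fin mulr_natr.
rewrite -EFinM lee_fin le_eqVlt; apply/orP; left; apply/eqP.
rewrite /C0 /B0; ring.
Qed.
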